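(* Let $n\ge1$, let $f:\{0,1\}^n\to\{0,1\}^n$, let $\check{M}$ be the adjacency matrix of its asynchronous iteration graph $\Gamma(f)$ (with respect to an enumeration of $\{0,1\}^n$), and let $M$ be the $2^n\times 2^n$ matrix with $M_{ij}=\frac{1}{n}\check{M}_{ij}$ for $i\neq j$ and $M_{ii}=1-\frac{1}{n}\sum_{j\neq i}\check{M}_{ij}$. If $\Gamma(f)$ is strongly connected, then the law of the output of the generator described below tends to the uniform distribution on $\{0,1\}^n$ if and only if $M$ is doubly stochastic (all its rows and all its columns sum to $1$).
   Context: With $F_f(i,x)=(x_1,\dots,x_{i-1},f_i(x),x_{i+1},\dots,x_n)$, $\Gamma(f)$ is the directed graph on $\{0,1\}^n$ with an arc from $x$ to $F_f(i,x)$ for every $x$ and $i\in\{1,\dots,n\}$; $\check{M}_{ij}=1$ if there is an arc from the $i$-th to the $j$-th configuration and $0$ otherwise. The generator (with parameters $f$, an integer $b$ and an initial configuration $x^0\in\{0,1\}^n$) does: set $x\leftarrow x^0$; draw $k\leftarrow b+r$ with $r$ uniformly distributed in $\{1,\dots,b+1\}$; then $k$ times, draw $s$ uniformly in $\{1,\dots,n\}$ and set $x\leftarrow F_f(s,x)$; output $x$. All random draws are provided by a uniform pseudo-random generator (XORshift), modeled as independent uniform draws, so that each step of the iteration is a Markov chain transition with matrix $M$. ''Tends to the uniform distribution'' refers to the law of the output as the number of iterations grows (i.e. as $b\to\infty$). *)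

(* Defs.v *)
From HB Require Import structures.
From mathcomp Require Import all_boot all_order all_algebra.
From mathcomp Require Import all_classical all_reals all_analysis.
Set Implicit Arguments. Unset Strict Implicit. Unset Printing Implicit Defensive.
Import Order.TTheory GRing.Theory Num.Theory.
Local Open Scope ring_scope.

Definition config (n : nat) := {ffun 'I_n -> bool}.

Definition Ff (n : nat) (f : config n -> config n) (i : 'I_n) (x : config n)
  : config n := [ffun j => if j == i then f x i else x j].

Definition arc (n : nat) (f : config n -> config n) : rel (config n) :=
  fun x y => [exists i : 'I_n, Ff f i x == y].

Definition strongly_connected (n : nat) (f : config n -> config n) : Prop :=
  forall x y : config n, connect (arc f) x y.

Definition N (n : nat) : nat := #|config n|.
Definition cfg (n : nat) (i : 'I_(N n)) : config n := enum_val i.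

Definition Mcheck (R : nzRingType) (n : nat) (f : config n -> config n)
  : 'M[R]_(N n) :=
  \matrix_(i, j) (arc f (cfg i) (cfg j))%:R.

Definition Mmat (R : fieldType) (n : nat) (f : config n -> config n)
  : 'M[R]_(N n) :=
  \matrix_(i, j)
    (if i == j then 1 - n%:R^-1 * \sum_(k | k != i) Mcheck R f i k
     else n%:R^-1 * Mcheck R f i j).

Definition doubly_stochastic (R : numDomainType) (m : nat) (A : 'M[R]_m)
  : Prop :=
  (forall i j, 0 <= A i j) /\
  (forall i, \sum_j A i j = 1) /\
  (forall j, \sum_i A i j = 1).

(* Law of x after k iterations of "draw s uniformly in {1..n}, x <- F_f(s,x)",
   starting from x0 (independent uniform draws). *)
Fixpoint iter_law (R : fieldType) (n : nat) (f : config n -> config n)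
  (k : nat) (x0 : config n) (y : config n) : R :=
  match k with
  | 0 => (x0 == y)%:R
  | k.+1 => \sum_(x : config n)
              iter_law R f k x0 x * (n%:R^-1 * #|[set s : 'I_n | Ff f s x == y]|%:R)
  end.

(* Law of the generator's output with parameters f, b, x0:
   k = b + r with r uniform in {1,...,b+1}. *)
Definition gen_law (R : fieldType) (n : nat) (f : config n -> config n)
  (b : nat) (x0 y : config n) : R :=
  (b.+1%:R)^-1 * \sum_(r < b.+1) iter_law R f (b + r.+1) x0 y.

(* Main.v *)
Require Import Defs.
From HB Require Import structures.
From mathcomp Require Import all_boot all_order all_algebra.
From mathcomp Require Import all_classical all_reals all_analysis.
From mathcomp Require Import lra.
Import Order.TTheory GRing.Theory Num.Theory.
Import numFieldNormedType.Exports.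
Local Open Scope ring_scope.

Definition Pr (R : fieldType) (n : nat) (f : config n -> config n)
  (x y : config n) : R := n%:R^-1 * #|[set s : 'I_n | Ff f s x == y]|%:R.
Arguments Pr R {n} f x y.

Lemma sum_cfg (R : nmodType) n (F : config n -> R) :
  \sum_(i < Defs.N n) F (cfg i) = \sum_x F x.
Proof. by rewrite (big_enum_val (A := predT) F) /=. Qed.

Lemma iter_lawS (R : fieldType) (n : nat) (f : config n -> config n) k x0 y :
  iter_law R f k.+1 x0 y = \sum_(x : config n) iter_law R f k x0 x * Pr R f x y.
Proof. reflexivity. Qed.
Lemma Pr_ge0 (R : realType) (n : nat) (f : config n -> config n) x y : 0 <= Pr R f x y.
Proof. by rewrite /Pr mulr_ge0 // invr_ge0. Qed.

Lemma card_Ff n (f : config n -> config n) x :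
  (\sum_y #|[set s : 'I_n | Ff f s x == y]| = n)%N.
Proof.
transitivity (\sum_y \sum_(s : 'I_n) (Ff f s x == y) : nat)%N.
  apply: eq_bigr => y _; rewrite -sum1_card big_mkcond /=.
  by apply: eq_bigr => s _; rewrite inE; case: eqP.
rewrite exchange_big /= -[n in RHS]card_ord -sum1_card.
apply: eq_bigr => s _; rewrite (bigD1 (Ff f s x)) //= eqxx big1 ?addn0 // => y.
by rewrite eq_sym => /negbTE ->.
Qed.

Lemma Pr_row (R : realType) (n : nat) (f : config n -> config n) x : (0 < n)%N -> \sum_y Pr R f x y = 1.
Proof.
move=> n0; rewrite /Pr -mulr_sumr -natr_sum card_Ff mulVf //.
by rewrite pnatr_eq0 -lt0n.
Qed.

Lemma Ff_uniq n (f : config n -> config n) x y s t :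
  x != y -> Ff f s x = y -> Ff f t x = y -> s = t.
Proof.
move=> /eqP xy; have [j xj] : exists j, x j != y j.
  case: (boolP [exists j, x j != y j]) => [/existsP//|/existsPn H].
  by exfalso; apply/xy/ffunP => j; apply/eqP; move: (H j); rewrite negbK.
move=> Hs Ht; move: xj.
have Hj u : Ff f u x = y -> x j != y j -> j = u.
  move=> <-; rewrite /Ff ffunE; have [->//|nju] := eqVneq j u; by rewrite eqxx.
by move=> xj; rewrite -(Hj s Hs xj) -(Hj t Ht xj).
Qed.

Lemma Pr_offdiag (R : realType) (n : nat) (f : config n -> config n) x y : x != y ->
  Pr R f x y = n%:R^-1 * (Defs.arc f x y)%:R.
Proof.
move=> xy; rewrite /Pr /Defs.arc; congr (_ * _%:R).
case: existsP => [[s /eqP Hs]|Hn].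
  rewrite (_ : [set _ | _] = [set s]) ?cards1 //; apply/setP => t.
  rewrite !inE; apply/eqP/eqP => [Ht|->//]; exact: (@Ff_uniq _ _ _ _ _ _ xy Ht Hs).
apply/eqP; rewrite cards_eq0; apply/eqP/setP => t; rewrite !inE.
by apply/negP => H; apply: Hn; exists t.
Qed.

Lemma Mmat_Pr (R : realType) (n : nat) (f : config n -> config n) i j : (0 < n)%N ->
  Mmat R f i j = Pr R f (cfg i) (cfg j).
Proof.
move=> n0; rewrite /Mmat mxE.
case: eqP => [<-|/eqP ij].
  have S := Pr_row R n f (cfg i) n0; rewrite -sum_cfg (bigD1 i) //= in S.
  rewrite (_ : _ * _ = \sum_(k < Defs.N n | k != i) Pr R f (cfg i) (cfg k)).
    by rewrite -{1}S addrK.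
  rewrite mulr_sumr; apply: eq_bigr => k ki.
  rewrite Pr_offdiag ?mxE //; apply: contra ki => /eqP /enum_val_inj ->.
  by [].
rewrite Pr_offdiag ?mxE //; apply: contra ij => /eqP /enum_val_inj ->.
by [].
Qed.

Lemma iter_ge0 (R : realType) (n : nat) (f : config n -> config n) k x0 y :
  0 <= iter_law R f k x0 y.
Proof.
elim: k y => [|k IH] y /=; first by rewrite ler0n.
by apply: sumr_ge0 => x _; rewrite mulr_ge0 // -/(Pr R f x y) Pr_ge0.
Qed.

Lemma iter_sum (R : realType) (n : nat) (f : config n -> config n) k x0 :
  (0 < n)%N -> \sum_y iter_law R f k x0 y = 1.
Proof.
move=> n0; elim: k => [|k IH] /=.
  rewrite (bigD1 x0) //= eqxx big1 ?addr0 // => y.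
  by rewrite eq_sym => /negbTE ->.
rewrite exchange_big /= -[RHS]IH; apply: eq_bigr => x _.
by rewrite -mulr_sumr -[RHS]mulr1; congr (_ * _); exact: Pr_row.
Qed.

Lemma iter_le1 (R : realType) (n : nat) (f : config n -> config n) k x0 y :
  (0 < n)%N -> iter_law R f k x0 y <= 1.
Proof.
move=> n0; rewrite -(iter_sum R n f k x0 n0) (bigD1 y) //= lerDl.
by apply: sumr_ge0 => x _; exact: iter_ge0.
Qed.

Lemma gen_sum (R : realType) (n : nat) (f : config n -> config n) b x0 :
  (0 < n)%N -> \sum_y gen_law R f b x0 y = 1.
Proof.
move=> n0; rewrite /gen_law -mulr_sumr exchange_big /=.
under eq_bigr do rewrite iter_sum //.
by rewrite sumr_const card_ord mulVf // pnatr_eq0.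
Qed.

Lemma gen_step (R : realType) (n : nat) (f : config n -> config n) b x0 y :
  \sum_x gen_law R f b x0 x * Pr R f x y - gen_law R f b x0 y =
  (b.+1%:R)^-1 * (iter_law R f (b + b.+1).+1 x0 y - iter_law R f b.+1 x0 y).
Proof.
rewrite /gen_law.
under eq_bigr do rewrite -mulrA.
rewrite -mulr_sumr -mulrBr; congr (_ * _).
under eq_bigr do rewrite mulr_suml.
rewrite exchange_big /= -sumrB.
under eq_bigr do rewrite -iter_lawS.
pose u k := iter_law R f (b + k.+1) x0 y.
rewrite (eq_bigr (fun r : 'I_b.+1 => u r.+1 - u r)); last first.
  by move=> r _; rewrite /u !addnS.
rewrite -(big_mkord xpredT (fun r => u r.+1 - u r)) telescope_sumr //.
by rewrite /u addn1 addnS.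
Qed.

Lemma maxprin (R : realType) (n : nat) (f : config n -> config n)
  (g : config n -> R) :
  (0 < n)%N -> strongly_connected f ->
  (forall y, \sum_x Pr R f x y = 1) ->
  (forall y, \sum_x g x * Pr R f x y = g y) ->
  exists c, forall x, g x = c.
Proof.
move=> n0 sc col stat.
pose x0 : config n := [ffun => false].
have [z' Hz] : exists z, forall x, g x <= g z.
  by case: (@arg_maxP _ _ (config n) x0 xpredT g isT) => z _ H; exists z => x; apply: H.
exists (g z').
have step y x : g y = g z' -> Defs.arc f x y -> g x = g z'.
  move=> gy axy.
  have E : \sum_x (Pr R f x y * (g z' - g x)) = 0.
    under eq_bigr do rewrite mulrBr.
    rewrite sumrB -mulr_suml col mul1r.
    under eq_bigr do rewrite mulrC.
    by rewrite stat gy subrr.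
  have H0 : forall i, true -> 0 <= Pr R f i y * (g z' - g i).
    by move=> i _; rewrite mulr_ge0 ?Pr_ge0 // subr_ge0.
  have Hx : Pr R f x y * (g z' - g x) = 0 by apply: (psumr_eq0P H0 E).
  move: Hx => /eqP; rewrite mulf_eq0 subr_eq0 => /orP[|/eqP //].
  have [exy|xy] := eqVneq x y; first by rewrite exy.
  rewrite Pr_offdiag // axy mulr1 invr_eq0 pnatr_eq0 => /eqP n00.
  by rewrite n00 in n0.
move=> x; have /connectP [p pth zl] := sc x z'.
elim: p x pth zl => [|y p IH] x /=; first by move=> _ ->.
move=> /andP[axy pth] zl.
by apply: (step y) => //; apply: IH.
Qed.

Definition Pm (R : realType) (n : nat) (f : config n -> config n)
  : 'M[R]_(Defs.N n) := \matrix_(i, j) Pr R f (cfg i) (cfg j).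
Arguments Pm R {n} f.

Definition Amat (R : realType) (n : nat) (f : config n -> config n) :=
  row_mx (Pm R f - 1%:M) (const_mx 1 : 'M[R]_(Defs.N n, 1)).
Arguments Amat R {n} f.

Lemma vPm (R : realType) (n : nat) (f : config n -> config n)
  (v : 'rV[R]_(Defs.N n)) j :
  (v *m Pm R f) 0 j = \sum_x v 0 (enum_rank x) * Pr R f x (cfg j).
Proof.
rewrite mxE -sum_cfg; apply: eq_bigr => i _.
by rewrite mxE /cfg enum_valK.
Qed.

Lemma Amat_free (R : realType) (n : nat) (f : config n -> config n) :
  (0 < n)%N -> strongly_connected f ->
  (forall y, \sum_x Pr R f x y = 1) -> row_free (Amat R f).
Proof.
move=> n0 sc col; apply: inj_row_free => v.
rewrite mul_mx_row => /eqP; rewrite row_mx_eq0 => /andP[/eqP H1 /eqP H2].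
pose g x := v 0 (enum_rank x).
have stat y : \sum_x g x * Pr R f x y = g y.
  have := congr1 (fun M : 'rV[R]_(Defs.N n) => M 0 (enum_rank y)) H1.
  rewrite mulmxBr mulmx1 !mxE => /eqP; rewrite subr_eq0 /g => /eqP <-.
  by rewrite -sum_cfg; apply: eq_bigr => i _; rewrite mxE /g /cfg enum_valK enum_rankK.
have [c Hc] := @maxprin R n f g n0 sc col stat.
have Hs : \sum_x g x = 0.
  have := congr1 (fun M : 'rV[R]_1 => M 0 0) H2; rewrite !mxE => E2.
  rewrite -sum_cfg -[RHS]E2; apply: eq_bigr => i _; by rewrite mxE mulr1 /g /cfg enum_valK.
have c0 : c = 0.
  move: Hs; under eq_bigr do rewrite Hc.
  rewrite sumr_const => /eqP; rewrite mulrn_eq0 => /orP[/eqP cN|/eqP //].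
  have : (0 < #|config n|)%N by apply/card_gt0P; exists [ffun => false].
  by rewrite cN.
apply/rowP => j; rewrite mxE (_ : v 0 j = g (cfg j)); first by rewrite Hc c0.
by rewrite /g /cfg enum_valK.
Qed.

Local Open Scope classical_set_scope.
Local Open Scope ring_scope.

Lemma cvg_fsum (T : finType) (R : realType) (u : nat -> T -> R) (l : T -> R) :
  (forall t, (fun b => u b t) @ \oo --> l t) ->
  (fun b => \sum_t u b t) @ \oo --> \sum_t l t.
Proof.
move=> H; rewrite unlock /=.
elim: (index_enum T) => [|t s IH] /=; first exact: cvg_cst.
exact: cvgD.
Qed.

Lemma eps_cvg0 (R : realType) (n : nat) (f : config n -> config n) x0 y :
  (0 < n)%N ->
  (fun b => \sum_x gen_law R f b x0 x * Pr R f x y - gen_law R f b x0 y)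
     @ \oo --> 0.
Proof.
move=> n0.
rewrite (_ : (fun b => _) = fun b => (b.+1%:R)^-1 *
   (iter_law R f (b + b.+1).+1 x0 y - iter_law R f b.+1 x0 y)); last first.
  by apply/funext => b; rewrite gen_step.
apply: (@squeeze_cvgr _ _ _ _ (fun b => - harmonic b) (fun b => harmonic b)).
- apply: filterE => b /=.
  have h0 : 0 <= (b.+1%:R : R)^-1 by rewrite invr_ge0.
  have a1 := iter_le1 R n f (b + b.+1).+1 x0 y n0.
  have a2 := iter_le1 R n f b.+1 x0 y n0.
  have b1 := iter_ge0 R n f (b + b.+1).+1 x0 y.
  have b2 := iter_ge0 R n f b.+1 x0 y.
  have key (h d : R) : 0 <= h -> -1 <= d <= 1 -> - h <= h * d <= h.
    move=> h0' /andP[d1 d2]; apply/andP; split.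
      by rewrite -mulrN1 ler_wpM2l.
    by rewrite -[X in _ <= X]mulr1 ler_wpM2l.
  apply: key => //.
  change (-1 <= iter_law R f (b + b.+1).+1 x0 y - iter_law R f b.+1 x0 y <= 1).
  by apply/andP; split; lra.
- by rewrite -oppr0; apply: cvgN; exact: cvg_harmonic.
- exact: cvg_harmonic.
Qed.

Theorem theorem4 (R : realType) (n : nat) (f : config n -> config n) :
  (0 < n)%N ->
  strongly_connected f ->
  ((forall x0 y : config n,
      (fun b : nat => gen_law R f b x0 y) @ \oo --> (#|config n|%:R : R)^-1)
   <-> doubly_stochastic (Mmat R f)).
Proof.
move=> n0 sc.
have Mm i j : Mmat R f i j = Pr R f (cfg i) (cfg j) := Mmat_Pr R n f i j n0.
have Npos : (0 < #|config n|)%N by apply/card_gt0P; exists [ffun => false].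
set c := (#|config n|%:R : R)^-1.
have hc : c != 0 by rewrite invr_eq0 pnatr_eq0 -lt0n.
have DS_iff : doubly_stochastic (Mmat R f) <-> forall y, \sum_x Pr R f x y = 1.
  split.
  - move=> [_ [_ Hc]] y; have := Hc (enum_rank y).
    under eq_bigr do rewrite Mm.
    by rewrite (sum_cfg _ _ (fun x => Pr R f x (cfg (enum_rank y)))) /cfg enum_rankK.
  - move=> col; split; [|split].
    + by move=> i j; rewrite Mm Pr_ge0.
    + move=> i; under eq_bigr do rewrite Mm.
      rewrite (sum_cfg _ _ (fun y => Pr R f (cfg i) y)); exact: Pr_row.
    + move=> j; under eq_bigr do rewrite Mm.
      rewrite (sum_cfg _ _ (fun x => Pr R f x (cfg j))); exact: col.
rewrite DS_iff; split.
- move=> H y.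
  have E1 := eps_cvg0 R n f y y n0.
  have E2 : (fun b => \sum_x gen_law R f b y x * Pr R f x y - gen_law R f b y y)
      @ \oo --> \sum_x c * Pr R f x y - c.
    apply: cvgB; last exact: H.
    by apply: cvg_fsum => x; apply: cvgMr_tmp; exact: H.
  have e0 : 0 = \sum_x c * Pr R f x y - c.
    apply: (cvg_unique (@norm_hausdorff _ R^o) E1 E2).
  move: e0; rewrite -mulr_sumr -[X in _ - X]mulr1 -mulrBr => /esym /eqP.
  rewrite mulf_eq0 (negbTE hc) /= subr_eq0 => /eqP //.
- move=> col x0 y.
  have [B AB] := row_freeP (@Amat_free R n f n0 sc col).
  pose w b : 'rV[R]_(Defs.N n) := \row_i gen_law R f b x0 (cfg i).
  pose u : 'rV[R]_(Defs.N n) := const_mx c.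
  have wAB b : gen_law R f b x0 y =
      \sum_l (w b *m Amat R f) 0 l * B l (enum_rank y).
    have : w b = w b *m Amat R f *m B by rewrite -mulmxA AB mulmx1.
    move=> /(congr1 (fun M : 'rV[R]_(Defs.N n) => M 0 (enum_rank y))).
    by rewrite {1}/w mxE /cfg enum_rankK => ->; rewrite mxE.
  have uAB : c = \sum_l (u *m Amat R f) 0 l * B l (enum_rank y).
    have : u = u *m Amat R f *m B by rewrite -mulmxA AB mulmx1.
    move=> /(congr1 (fun M : 'rV[R]_(Defs.N n) => M 0 (enum_rank y))).
    by rewrite {1}/u mxE => ->; rewrite mxE.
  rewrite (_ : (fun b => gen_law R f b x0 y) = fun b =>
      \sum_l (w b *m Amat R f) 0 l * B l (enum_rank y)); last first.
    by apply/funext => b; exact: wAB.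
  rewrite uAB; apply: cvg_fsum => l; apply: cvgMr_tmp.
  rewrite -(fintype.splitK l); case: (fintype.split l) => [j|k] /=.
    have -> : (fun b => (w b *m Amat R f) 0 (lshift 1 j)) = (fun b =>
        \sum_x gen_law R f b x0 x * Pr R f x (cfg j) - gen_law R f b x0 (cfg j)).
      apply/funext => b; rewrite /Amat mul_mx_row row_mxEl mulmxBr mulmx1.
      rewrite mxE vPm /w mxE; congr (_ - _).
      apply: eq_bigr => x _.
      by rewrite mxE /cfg enum_rankK.
      by rewrite mxE.
    rewrite /Amat mul_mx_row row_mxEl mulmxBr mulmx1 mxE vPm mxE.
    under eq_bigr do rewrite mxE.
    rewrite -mulr_sumr col mulr1 /u mxE subrr.
    exact: eps_cvg0.
  have -> : (fun b => (w b *m Amat R f) 0 (rshift (Defs.N n) k)) = (fun b => 1).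
    apply/funext => b; rewrite /Amat mul_mx_row row_mxEr mxE.
    rewrite -[RHS](gen_sum R n f b x0 n0) -sum_cfg; apply: eq_bigr => i _.
    by rewrite !mxE mulr1.
  rewrite /Amat mul_mx_row row_mxEr mxE.
  under eq_bigr do rewrite !mxE mulr1.
  rewrite sumr_const card_ord -mulr_natr /c mulVf; first exact: cvg_cst.
  by rewrite pnatr_eq0 -lt0n.
Qed.
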